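(* The map $V:\mathcal S^{2,2}\to\mathcal S^{2,2}$ has a unique fixed point $p=(1/2,0,1/2,0)$, and there is a neighborhood $\mathcal U(p)\subset\mathcal S^{2,2}$ of $p$, open relative to $\mathcal S^{2,2}$, such that $\lim_{n\to\infty}V^n(s)=p$ for every $s\in\mathcal U(p)$.
   Context: $\mathcal S^{2,2}=\{(x,y,u,v)\in\mathbb{R}^4: x,y,u,v\ge0,\ x+y+u+v=1,\ x+y>0,\ u+v>0\}$. $V:\mathcal S^{2,2}\to\mathcal S^{2,2}$ is $V(x,y,u,v)=(x',y',u',v')$ with $x'=\dfrac{2xu+yu}{4(x+y)(u+v)}$, $y'=\dfrac{6xv+3yu+4yv}{12(x+y)(u+v)}$, $u'=\dfrac{6xu+6xv+3yu+4yv}{12(x+y)(u+v)}$, $v'=\dfrac{3yu+4yv}{12(x+y)(u+v)}$. $V^n$ denotes the $n$-fold iterate. *)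

(* Defs.v *)
From Stdlib Require Import Reals Lra.
Open Scope R_scope.

Record pt4 : Type := P4 { px : R; py : R; pu : R; pv : R }.

Definition S22 (s : pt4) : Prop :=
  let '(P4 x y u v) := s in
  0 <= x /\ 0 <= y /\ 0 <= u /\ 0 <= v /\ x + y + u + v = 1 /\
  x + y > 0 /\ u + v > 0.

Definition V (s : pt4) : pt4 :=
  let '(P4 x y u v) := s in
  let d := (x + y) * (u + v) in
  P4 ((2*x*u + y*u) / (4 * d))
     ((6*x*v + 3*y*u + 4*y*v) / (12 * d))
     ((6*x*u + 6*x*v + 3*y*u + 4*y*v) / (12 * d))
     ((3*y*u + 4*y*v) / (12 * d)).

Fixpoint Viter (n : nat) (s : pt4) : pt4 :=
  match n with
  | O => s
  | S k => V (Viter k s)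
  end.

Definition pfix : pt4 := P4 (1/2) 0 (1/2) 0.

(* Convergence of a sequence in R^4 (coordinatewise = in the usual topology). *)
Definition cv4 (a : nat -> pt4) (l : pt4) : Prop :=
  Un_cv (fun n => px (a n)) (px l) /\ Un_cv (fun n => py (a n)) (py l) /\
  Un_cv (fun n => pu (a n)) (pu l) /\ Un_cv (fun n => pv (a n)) (pv l).

(* Open ball in R^4 for the max-norm (same topology as the Euclidean one). *)
Definition ball4 (c : pt4) (r : R) (s : pt4) : Prop :=
  Rabs (px s - px c) < r /\ Rabs (py s - py c) < r /\
  Rabs (pu s - pu c) < r /\ Rabs (pv s - pv c) < r.

Definition rel_open_S22 (U : pt4 -> Prop) : Prop :=
  (forall s, U s -> S22 s) /\
  (forall s, U s -> exists r, r > 0 /\ forall t, S22 t -> ball4 s r t -> U t).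

(* Main.v *)
Require Import Defs.
From Stdlib Require Import Reals Lra Psatz Classical.
Open Scope R_scope.

Definition sf (p:pt4) := py p / (px p + py p).
Definition tf (p:pt4) := pv p / (pu p + pv p).

Definition Vf (s t : R) : pt4 :=
  P4 ((1-t)*(2-s)/4) ((6*t+3*s-5*s*t)/12) ((1-s)/2 + s*(3+t)/12) (s*(3+t)/12).

Lemma S22_st p : S22 p -> 0<=sf p<=1 /\ 0<=tf p<=1.
Proof.
  destruct p as [x y u v]; unfold S22, sf, tf; simpl; intros (?&?&?&?&?&?&?).
  split; split.
  - unfold Rdiv; apply Rmult_le_pos; [lra| apply Rlt_le, Rinv_0_lt_compat; lra].
  - apply Rmult_le_reg_r with (x+y); [lra|]. unfold Rdiv. rewrite Rmult_assoc, Rinv_l; lra.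
  - unfold Rdiv; apply Rmult_le_pos; [lra| apply Rlt_le, Rinv_0_lt_compat; lra].
  - apply Rmult_le_reg_r with (u+v); [lra|]. unfold Rdiv. rewrite Rmult_assoc, Rinv_l; lra.
Qed.

Lemma V_form p : S22 p -> V p = Vf (sf p) (tf p).
Proof.
  destruct p as [x y u v]; unfold S22, sf, tf, V, Vf; simpl; intros (?&?&?&?&?&?&?).
  f_equal; field; lra.
Qed.

Lemma Vf_S22 s t : 0<=s<=1 -> 0<=t<=1 -> S22 (Vf s t).
Proof.
  intros. unfold Vf, S22. assert (0<=s*t<=1) by nra.
  repeat split; nra.
Qed.

Lemma Vf_sf s t : 0<=s<=1 -> 0<=t<=1 -> sf (Vf s t) = (6*t+3*s-5*s*t)/(6-2*s*t).
Proof. intros. assert (0<=s*t<=1) by nra. unfold sf, Vf; simpl. field. lra. Qed.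

Lemma Vf_tf s t : 0<=s<=1 -> 0<=t<=1 -> tf (Vf s t) = s*(3+t)/(6+2*s*t).
Proof. intros. assert (0<=s*t<=1) by nra. unfold tf, Vf; simpl. field. lra. Qed.
Lemma key (s t : R) : 0<=s<=1 -> 0<=t<=1 ->
  (6*t+3*s-5*s*t)/(6-2*s*t) + s*(3+t)/(6+2*s*t) <= s+t - s*t/4 /\
  (6*t+3*s-5*s*t)/(6-2*s*t) >= 2/9*s+4/9*t /\
  s*(3+t)/(6+2*s*t) >= s/2 /\
  0 <= (6*t+3*s-5*s*t)/(6-2*s*t) <= 1 /\ 0 <= s*(3+t)/(6+2*s*t) <= 1.
Proof.
  intros [Hs0 Hs1] [Ht0 Ht1].
  assert (Hst: 0 <= s*t <= 1) by nra.
  assert (D1 : 6-2*s*t > 0) by lra.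
  assert (D2 : 6+2*s*t > 0) by lra.
  set (a := (6*t+3*s-5*s*t)/(6-2*s*t)).
  set (b := s*(3+t)/(6+2*s*t)).
  assert (Ha : a*(6-2*s*t) = 6*t+3*s-5*s*t) by (unfold a; field; lra).
  assert (Hb : b*(6+2*s*t) = s*(3+t)) by (unfold b; field; lra).
  clearbody a b.
  split; [|split;[|split;[|split;[split|split]]]].
  all: try nra.
  assert (HQ : -15+12*t-12*s*t+4*s*s*t+4*s*t*t-s*s*t*t <= -3) by nra.
  assert (HN : (a + b - (s+t-s*t/4))*((6-2*s*t)*(6+2*s*t)) = s*t*(-15+12*t-12*s*t+4*s*s*t+4*s*t*t-s*s*t*t)).
  { assert (E: (a + b - (s+t-s*t/4))*((6-2*s*t)*(6+2*s*t)) =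
      (a*(6-2*s*t))*(6+2*s*t) + (b*(6+2*s*t))*(6-2*s*t) - (s+t-s*t/4)*((6-2*s*t)*(6+2*s*t))) by ring.
    rewrite E, Ha, Hb. field. }
  assert (HP : (6-2*s*t)*(6+2*s*t) > 0) by nra.
  assert (a + b - (s+t-s*t/4) <= 0); [|lra].
  destruct (Rle_or_lt (a + b - (s+t-s*t/4)) 0) as [h|h]; auto.
  exfalso. assert (0 < (a + b - (s+t-s*t/4))*((6-2*s*t)*(6+2*s*t))) by (apply Rmult_lt_0_compat; lra).
  nra.
Qed.

Section It.
Variable p : pt4.
Hypothesis Hp : S22 p.
Let sq n := sf (Viter n p).
Let tq n := tf (Viter n p).
Let L n := sq n + tq n.

Lemma iter_S22 n : S22 (Viter n p).
Proof. induction n; simpl; auto. rewrite V_form by auto. destruct (S22_st _ IHn). now apply Vf_S22. Qed.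

Lemma iter_form n : Viter (S n) p = Vf (sq n) (tq n).
Proof. simpl. apply V_form, iter_S22. Qed.

Lemma st_bounds n : 0<=sq n<=1 /\ 0<=tq n<=1.
Proof. apply S22_st, iter_S22. Qed.

Lemma step n : L (S n) <= L n - sq n * tq n / 4 /\ sq (S n) >= 2/9*sq n + 4/9*tq n /\ tq (S n) >= sq n / 2.
Proof.
  destruct (st_bounds n) as [H1 H2].
  unfold L, sq, tq. rewrite iter_form. fold (sq n) (tq n).
  rewrite Vf_sf, Vf_tf by auto.
  destruct (key _ _ H1 H2) as (A&B&C&_). repeat split; lra.
Qed.

Lemma L_nonneg n : 0 <= L n.
Proof. destruct (st_bounds n). unfold L; lra. Qed.

Lemma L_dec n : L (S n) <= L n.
Proof. destruct (step n) as (A&_). destruct (st_bounds n). assert (0 <= sq n * tq n) by nra. lra. Qed.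

Lemma L_mono n k : L (k + n) <= L n.
Proof. induction k; simpl; [lra|]. pose proof (L_dec (k+n)). lra. Qed.

Lemma L_three n : L (S (S (S n))) <= L n - L n * L n / 729.
Proof.
  destruct (step n) as (_&A1&B1). destruct (step (S n)) as (_&A2&B2).
  destruct (step (S (S n))) as (C3&_&_).
  destruct (st_bounds n). destruct (st_bounds (S n)). destruct (st_bounds (S (S n))).
  pose proof (L_dec n). pose proof (L_dec (S n)). pose proof (L_nonneg n).
  unfold L in *.
  assert (sq (S (S n)) >= 4/81 * (sq n + tq n)) by lra.
  assert (tq (S (S n)) >= 1/9 * (sq n + tq n)) by lra.
  assert (sq (S (S n)) * tq (S (S n)) >= 4/729 * ((sq n + tq n) * (sq n + tq n))) by nra.
  lra.
Qed.

Lemma L_small eps : eps > 0 -> exists N, L N < eps.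
Proof.
  intros He. apply NNPP. intro Hn.
  assert (Hall : forall N, L N >= eps).
  { intro N. destruct (Rlt_or_le (L N) eps); [exfalso; apply Hn; eauto| lra]. }
  set (d := eps*eps/729).
  assert (Hd : d > 0) by (unfold d; nra).
  assert (Hk : forall k, L (3*k) <= L 0 - INR k * d).
  { induction k. simpl. lra.
    replace (3 * S k)%nat with (S (S (S (3*k)))) by lia.
    pose proof (L_three (3*k)). pose proof (Hall (3*k)%nat).
    rewrite S_INR. assert (L (3*k) * L (3*k) >= eps*eps) by nra.
    unfold d in *. lra. }
  assert (L0 : L 0 <= 2) by (destruct (st_bounds 0); unfold L; lra).
  destruct (INR_archimed d 2 Hd) as [k Hk2].
  pose proof (Hk k). pose proof (Hall (3*k)%nat). lra.
Qed.

Lemma conv : cv4 (fun n => Viter n p) pfix.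
Proof.
  assert (G : forall (f : R -> R -> R) c,
    (forall s t, 0<=s<=1 -> 0<=t<=1 -> Rabs (f s t - c) <= s + t) ->
    Un_cv (fun n => f (sq n) (tq n)) c ->
    Un_cv (fun n => f (sq n) (tq n)) c) by auto.
  assert (M : forall (g : pt4 -> R) c,
    (forall s t, 0<=s<=1 -> 0<=t<=1 -> Rabs (g (Vf s t) - c) <= s + t) ->
    Un_cv (fun n => g (Viter n p)) c).
  { intros g c Hg eps He. destruct (L_small eps He) as [N HN].
    exists (S N). intros n Hn. destruct n as [|m]; [lia|].
    unfold R_dist. rewrite iter_form.
    destruct (st_bounds m) as [B1 B2].
    pose proof (Hg _ _ B1 B2).
    replace m with ((m - N) + N)%nat in * by lia.
    pose proof (L_mono N (m-N)). unfold L in *. lra. }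
  unfold cv4, pfix; simpl; repeat split; apply M; intros s t Hs Ht; unfold Vf; simpl;
    assert (0 <= s*t <= 1) by nra; apply Rabs_le; split; nra.
Qed.
End It.

Theorem theorem4p1 :
  (S22 pfix /\ V pfix = pfix /\ (forall s, S22 s -> V s = s -> s = pfix)) /\
  (exists U : pt4 -> Prop,
      rel_open_S22 U /\ U pfix /\
      forall s, U s -> cv4 (fun n => Viter n s) pfix).
Proof.
  assert (HP : S22 pfix) by (unfold S22, pfix; lra).
  split; [split; [exact HP| split]|].
  - unfold V, pfix. f_equal; field.
  - intros q Hq Hf.
    destruct (S22_st _ Hq) as [B1 B2].
    pose proof (V_form _ Hq) as E. rewrite Hf in E.
    assert (E1 : sf q = (6*tf q+3*sf q-5*sf q*tf q)/(6-2*sf q*tf q)).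
    { rewrite E at 1. apply Vf_sf; auto. }
    assert (E2 : tf q = sf q*(3+tf q)/(6+2*sf q*tf q)).
    { rewrite E at 1. apply Vf_tf; auto. }
    destruct (key _ _ B1 B2) as (A&_).
    rewrite <- E1, <- E2 in A.
    assert (Z : sf q * tf q = 0) by nra.
    assert (sf q = 0 /\ tf q = 0) as [Z1 Z2].
    { assert (tf q * (6+2*sf q*tf q) = sf q * (3 + tf q)) by (rewrite E2 at 1; field; nra).
      assert (sf q * (6-2*sf q*tf q) = 6 * tf q + 3 * sf q - 5*sf q*tf q) by (rewrite E1 at 1; field; nra).
      nra. }
    rewrite E, Z1, Z2. unfold Vf, pfix. f_equal; field.
  - exists S22. split; [split|split]; auto.
    + intros s Hs. exists 1. split; auto; lra.
    + intros s Hs. apply conv; auto.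
Qed.
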